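(* For any integer $r \geq 1$ and any nonnegative integers $n, k$, \[E_r(n,k) = \sum_{\substack{\epsilon \in F(r,n) \\ |\epsilon| = n}} \sum_{\substack{t \in F(r,k) \\ |t| = k}} \binom{n}{\epsilon(1), \epsilon(2), \ldots, \epsilon(r)} \prod_{i=1}^r E(\epsilon(i), t(i)).\]
   Context: $F(r,k)$ denotes the set of functions $\epsilon: \{1, \ldots, r\} \to \{0, 1, \ldots, k\}$, and $|\epsilon| = \sum_i \epsilon(i)$. For $n \geq 1$, $k \geq 0$, the Eulerian number $E(n,k)$ is the number of permutations $w$ of $\{1, \ldots, n\}$ with exactly $k$ descents (indices $i$ with $w(i) > w(i+1)$); by convention $E(n,k) = 0$ whenever $n \leq 0$ or $k \notin \{0, \ldots, n-1\}$. The $r$th order Eulerian number $E_r(n,k)$ is the number of pairs $(w, S)$ with $w$ a permutation of $\{1, \ldots, n\}$ and $S \subset \{1, \ldots, n-1\}$ of size $r-1$ such that exactly $k$ descents of $w$ do not lie in $S$. The multinomial coefficient is $\binom{n}{\epsilon(1),\ldots,\epsilon(r)} = n!/\prod_i \epsilon(i)!$. *)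

(* Defs.v *)
From mathcomp Require Import all_boot all_fingroup.
Set Implicit Arguments. Unset Strict Implicit. Unset Printing Implicit Defensive.

(* Value (as a nat) of the permutation w of 'I_n at the 0-based position j;
   0 if j is out of range (never used out of range below). *)
Definition wnat (n : nat) (w : 'S_n) (j : nat) : nat :=
  if @insub nat (fun m => m < n) 'I_n j is Some o then val (w o) else 0.

(* Descent set of w.  The descent at 1-based index i in {1,...,n-1}
   (w(i) > w(i+1)) is represented by the element i-1 of 'I_(n-1);
   i.e. {1,...,n-1} is identified with 'I_(n-1) via i |-> i-1. *)
Definition descents (n : nat) (w : 'S_n) : {set 'I_n.-1} :=
  [set i : 'I_n.-1 | wnat w i.+1 < wnat w i].

(* Eulerian number E(n,k); 0 when n <= 0 (here n = 0). *)
Definition eulerian (n k : nat) : nat :=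
  if n == 0 then 0 else #|[set w : 'S_n | #|descents w| == k]|.

(* r-th order Eulerian number E_r(n,k): pairs (w,S), S subset of {1..n-1}
   of size r-1, with exactly k descents of w outside S.  Same convention
   as E: 0 when n = 0. *)
Definition eulerian_r (r n k : nat) : nat :=
  if n == 0 then 0 else
  #|[set p : 'S_n * {set 'I_n.-1} |
        (#|p.2| == r.-1) && (#|descents p.1 :\: p.2| == k)]|.

Definition multinom (r n : nat) (eps : 'I_r -> nat) : nat :=
  n`! %/ \prod_(i < r) (eps i)`!.

(* Main.v *)
Require Import Defs.
From mathcomp Require Import all_boot all_fingroup.
From mathcomp Require Import zify.
Set Implicit Arguments. Unset Strict Implicit. Unset Printing Implicit Defensive.

Lemma perm_of_sub (T : eqType) (s1 s2 : seq T) :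
  uniq s1 -> uniq s2 -> {subset s1 <= s2} -> size s2 <= size s1 -> perm_eq s1 s2.
Proof.
move=> u1 u2 sub sz; apply: uniq_perm => //.
by have [_ H] := uniq_min_size u1 sub sz.
Qed.

Fixpoint dout (s : seq nat) (b : seq bool) : nat :=
  match s with
  | x :: s' => (match s' with y :: _ => ~~ head false b && (y < x) | _ => false end)
               + dout s' (behead b)
  | [::] => 0
  end.

Definition des s := dout s [::].

Lemma dout_nseq s j : dout s (nseq j false) = des s.
Proof.
rewrite /des; elim: s j => [|x s IH] j //=.
case: j => [|j] /=; first by [].
by rewrite IH; case: s {IH}.
Qed.

Lemma dout_cut s j b :
  dout s (nseq j false ++ true :: b) = des (take j.+1 s) + dout (drop j.+1 s) b.
Proof.
elim: j s => [|j IH] [|x s] //=.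
- by case: s.
- rewrite IH /des /= -/(des _) ; case: s => [|y s] //=.
  by rewrite addnA.
Qed.

Fixpoint bs (L t : nat) : seq (seq bool) :=
  match L with
  | 0 => if t == 0 then [:: [::]] else [::]
  | L'.+1 => (if t is t'.+1 then map (cons true) (bs L' t') else [::])
             ++ map (cons false) (bs L' t)
  end.

Lemma size_bs L t : size (bs L t) = 'C(L, t).
Proof.
elim: L t => [|L IH] [|t] //=; rewrite ?size_cat !size_map !IH ?bin0 //.
by rewrite binS addnC.
Qed.

Lemma mem_map_cons (T : eqType) (c : T) X b :
  (b \in map (cons c) X) = if b is y :: b' then (y == c) && (b' \in X) else false.
Proof.
elim: X => [|z X IH]; first by rewrite /= in_nil; case: b => // *; rewrite in_nil andbF.
rewrite map_cons in_cons IH; case: b {IH} => // y b'; rewrite eqseq_cons in_cons; case: (y == c) => //=.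
Qed.

Lemma mem_bs L t b : (b \in bs L t) = (size b == L) && (count id b == t).
Proof.
elim: L t b => [|L IH] t b /=.
  by case: t => [|t]; case: b.
rewrite mem_cat.
case: t => [|t]; case: b => [|c b] /=; rewrite ?mem_map_cons ?in_nil ?IH ?eqSS //=.
- by case: c; rewrite /= ?andbF ?andbT ?add0n ?add1n.
- by case: c; rewrite /= ?andbF ?andbT ?orbF ?add0n ?add1n ?eqSS.
Qed.

Lemma uniq_bs L t : uniq (bs L t).
Proof.
elim: L t => [|L IH] [|t] //=; rewrite ?map_inj_uniq //; try by move=> ?? [].
rewrite cat_uniq !map_inj_uniq ?IH //; try by move=> ?? [].
rewrite andbT; apply/hasP => -[x /mapP[y _ ->] /mapP[z _]] //.
Qed.

Lemma bs0 L : bs L 0 = [:: nseq L false].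
Proof. by elim: L => //= L ->. Qed.

Lemma bs_first (L t : nat) (G : seq bool -> nat) :
  \sum_(b <- bs L t.+1) G b =
  \sum_(j < L) \sum_(b <- bs (L - j.+1) t) G (nseq j false ++ true :: b).
Proof.
elim: L G => [|L IH] G /=; first by rewrite big_nil big_ord0.
rewrite big_cat !big_map IH big_ord_recl /= subn1 /=.
congr (_ + _); apply: eq_bigr => j _; rewrite /bump /= subSS.
Qed.

Fixpoint subs (m : nat) (A : seq nat) : seq (seq nat) :=
  match A with
  | [::] => if m == 0 then [:: [::]] else [::]
  | x :: A' => (if m is m'.+1 then map (cons x) (subs m' A') else [::]) ++ subs m A'
  end.

Lemma size_subs m A : size (subs m A) = 'C(size A, m).
Proof.
elim: A m => [|x A IH] [|m] //=; rewrite ?size_cat ?size_map !IH //.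
  by rewrite !bin0.
by rewrite binS addnC.
Qed.

Lemma mem_subs m A B : (B \in subs m A) = subseq B A && (size B == m).
Proof.
elim: A m B => [|x A IH] m B /=.
  case: m => [|m]; case: B => //= *; by rewrite inE.
rewrite mem_cat IH.
case: B => [|y B] /=.
  rewrite sub0seq /=; case: m => [|m] //=; rewrite orbF.
  by apply/negP => /mapP[? _].
case: m => [|m] /=.
  by rewrite !andbF.
rewrite eqSS.
have [<-|nyx] := eqVneq y x.
  rewrite mem_map; last by move=> ?? [].
  rewrite IH; apply/orP/idP => [[//|/andP[h ->]]|]; last by left.
  by rewrite andbT; apply: subseq_trans h; apply: subseq_cons.
by rewrite mem_map_cons (negbTE nyx).
Qed.

Lemma uniq_subs m A : uniq A -> uniq (subs m A).
Proof.
elim: A m => [|x A IH] m /=; first by case: (m == 0).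
move=> /andP[xA uA].
case: m => [|m] /=; first exact: IH.
rewrite cat_uniq map_inj_uniq ?IH //; last by move=> ?? [].
rewrite andbT; apply/hasP => -[B] ; rewrite mem_subs => /andP[sB _].
move=> /mapP[B' _ eB]; move: sB; rewrite eB => /mem_subseq /(_ x).
by rewrite inE eqxx (negbTE xA) => /(_ isT).
Qed.

Definition rest (A B : seq nat) := [seq x <- A | x \notin B].

Lemma perm_rest m A B : uniq A -> B \in subs m A -> perm_eq A (B ++ rest A B).
Proof.
move=> uA; rewrite mem_subs => /andP[sBA _].
have EB : B = [seq x <- A | x \in B] by apply/subseq_uniqP.
rewrite perm_sym; rewrite {1}EB; exact/permPl/(perm_filterC (mem B) A).
Qed.

Lemma one_B m A s X : uniq A -> m <= size A -> perm_eq s A ->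
  \sum_(B <- subs m A | perm_eq (take m s) B) X = X.
Proof.
move=> uA hm sA.
set B0 := [seq x <- A | x \in take m s].
have us : uniq s by rewrite (perm_uniq sA).
have B0t : perm_eq B0 (take m s).
  apply: uniq_perm; [exact: filter_uniq | exact: take_uniq |].
  move=> x; rewrite mem_filter; apply/andP/idP => [[]//|h]; split => //.
  by rewrite -(perm_mem sA); apply: mem_take h.
have B0in : B0 \in subs m A.
  rewrite mem_subs filter_subseq (perm_size B0t) size_take (perm_size sA).
  by move: hm; rewrite leq_eqVlt => /orP[/eqP->|->]; rewrite ?ltnn eqxx.
rewrite big_const_seq.
have -> : count (fun B => perm_eq (take m s) B) (subs m A) = 1.
  transitivity (count_mem B0 (subs m A)); last by rewrite (count_uniq_mem _ (uniq_subs m uA)) B0in.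
  apply: eq_in_count => B BA /=.
  apply/idP/eqP => [tB|->]; last by rewrite perm_sym.
  move: BA; rewrite mem_subs => /andP[sBA _].
  have -> : B = [seq x <- A | x \in B] by apply/subseq_uniqP.
  by apply: eq_filter => x; rewrite (perm_mem tB).
by rewrite /= addn0.
Qed.

Lemma fixed_B m A B (F : seq nat -> seq nat -> nat) : uniq A -> B \in subs m A ->
  \sum_(s <- permutations A | perm_eq (take m s) B) F (take m s) (drop m s) =
  \sum_(s1 <- permutations B) \sum_(s2 <- permutations (rest A B)) F s1 s2.
Proof.
move=> uA BA.
have sB : size B = m by move: BA; rewrite mem_subs => /andP[_ /eqP].
have pA := perm_rest uA BA.
transitivity (\sum_(p <- [seq (s1, s2) | s1 <- permutations B, s2 <- permutations (rest A B)]) F p.1 p.2); last by rewrite big_allpairs.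
rewrite -big_filter -(big_map (fun s => (take m s, drop m s)) xpredT (fun p => F p.1 p.2)).
apply: perm_big; apply: uniq_perm.
- rewrite map_inj_uniq ?filter_uniq ?permutations_uniq //.
  by move=> s s' [e1 e2]; rewrite -(cat_take_drop m s) e1 e2 cat_take_drop.
- apply: allpairs_uniq; rewrite ?permutations_uniq //.
  by move=> [? ?] [? ?] _ _ [-> ->].
move=> [s1 s2]; apply/mapP/allpairsP => [[s]|[[t1 t2] /= [h1 h2 [-> ->]]]].
  rewrite mem_filter mem_permutations => /andP[tB sA] [-> ->].
  exists (take m s, drop m s) => /=; split => //; rewrite mem_permutations // perm_sym.
  rewrite -(perm_cat2l B) -(permPl pA) -(permPl sA) -{1}(cat_take_drop m s).
  by rewrite perm_cat2r.
move: h1 h2; rewrite !mem_permutations => h1 h2.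
have st1 : size t1 = m by rewrite (perm_size h1).
exists (t1 ++ t2); last by rewrite -st1 take_size_cat // drop_size_cat.
rewrite mem_filter mem_permutations -st1 take_size_cat // h1 /=.
by rewrite (permPr pA) perm_cat.
Qed.

Lemma split_perms m A (F : seq nat -> seq nat -> nat) : uniq A -> m <= size A ->
  \sum_(s <- permutations A) F (take m s) (drop m s) =
  \sum_(B <- subs m A) \sum_(s1 <- permutations B) \sum_(s2 <- permutations (rest A B)) F s1 s2.
Proof.
move=> uA hm.
transitivity (\sum_(s <- permutations A) \sum_(B <- subs m A | perm_eq (take m s) B) F (take m s) (drop m s)).
  apply: eq_big_seq => s; rewrite mem_permutations => sA.
  by rewrite one_B.
under eq_bigr do rewrite big_mkcond.
rewrite exchange_big /=; apply: eq_big_seq => B BA.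
by rewrite -(fixed_B F uA BA) [RHS]big_mkcond.
Qed.

Section Std.
Variable B : seq nat.
Hypothesis uB : uniq B.
Let f x := count (fun y => y < x) B.

Lemma f_mono x y : x \in B -> x < y -> f x < f y.
Proof.
move=> xB xy; rewrite /f.
have h1 : count (predU (fun z => z < x) (pred1 x)) B <= count (fun z => z < y) B.
  apply: sub_count => z /= /orP[zx|/eqP->//]; exact: ltn_trans zx xy.
apply: leq_trans h1; rewrite -[X in X <= _]addn0.
have h2 := count_predUI (fun z => z < x) (pred1 x) B.
have h3 : count (predI (fun z => z < x) (pred1 x)) B = 0.
  rewrite -(count_pred0 B); apply: eq_count => z /=.
  by apply/andP => -[zx /eqP ez]; rewrite ez ltnn in zx.
rewrite h3 addn0 in h2; rewrite h2 addn0 -addn1 leq_add2l.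
by rewrite -has_count has_pred1.
Qed.

Lemma f_lt x : x \in B -> f x < size B.
Proof.
move=> xB; rewrite /f -(count_predC (fun y => y < x) B) -[X in X < _]addn0 ltn_add2l.
by rewrite -has_count; apply/hasP; exists x => //=; rewrite ltnn.
Qed.

Lemma f_cmp x y : x \in B -> y \in B -> (f y < f x) = (y < x).
Proof.
move=> xB yB; case: (ltngtP y x) => [yx|xy|->]; last by rewrite ltnn.
- exact: f_mono.
- by apply/negbTE; rewrite -leqNgt ltnW // f_mono.
Qed.

Lemma f_inj : {in B &, injective f}.
Proof.
move=> x y xB yB e; case: (ltngtP x y) => // h.
- by have := f_mono xB h; rewrite e ltnn.
- by have := f_mono yB h; rewrite e ltnn.
Qed.

Lemma des_map s : {subset s <= B} -> des (map f s) = des s.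
Proof.
rewrite /des; elim: s => [|x s IH] //= sB.
rewrite IH; last by move=> z zs; apply: sB; rewrite inE zs orbT.
case: s sB {IH} => [|y s] //= sB.
by rewrite f_cmp // sB // !inE eqxx ?orbT.
Qed.

Lemma std_des j :
  \sum_(s <- permutations B) (des s == j) =
  \sum_(s <- permutations (iota 0 (size B))) (des s == j).
Proof.
transitivity (\sum_(s <- permutations B) (des (map f s) == j)).
  apply: eq_big_seq => s; rewrite mem_permutations => sB.
  by rewrite des_map // => z; rewrite (perm_mem sB).
transitivity (\sum_(t <- map (map f) (permutations B)) (des t == j)); first by rewrite big_map.
apply: perm_big.
have fB : perm_eq (map f B) (iota 0 (size B)).
  apply: perm_of_sub; rewrite ?iota_uniq ?size_map ?size_iota //.
  - by rewrite map_inj_in_uniq //; exact: f_inj.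
  - by move=> z /mapP[x xB ->]; rewrite mem_iota add0n f_lt.
apply: perm_of_sub; rewrite ?permutations_uniq //.
- rewrite map_inj_in_uniq ?permutations_uniq //.
  move=> s t; rewrite !mem_permutations => sB tB.
  apply: (inj_in_map f_inj); rewrite inE; apply/allP => z.
    by rewrite (perm_mem sB).
  by rewrite (perm_mem tB).
- move=> t /mapP[s]; rewrite !mem_permutations => sB ->.
  exact: perm_trans (perm_map f sB) fB.
- by rewrite size_map !size_permutations ?iota_uniq // size_iota.
Qed.
End Std.

Definition wseq n (w : 'S_n) := [seq wnat w j | j <- iota 0 n].

Lemma wnat_ord n (w : 'S_n) (i : 'I_n) : wnat w i = w i.
Proof.
rewrite /wnat; case: insubP => [o _ /val_inj -> //|].
by rewrite ltn_ord.
Qed.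

Lemma nth_wseq n (w : 'S_n) j : j < n -> nth 0 (wseq w) j = wnat w j.
Proof. by move=> hj; rewrite (nth_map 0) ?size_iota // nth_iota. Qed.

Lemma wseq_perm n (w : 'S_n) : perm_eq (wseq w) (iota 0 n).
Proof.
apply: perm_of_sub; rewrite ?iota_uniq ?size_map ?size_iota //.
- rewrite map_inj_in_uniq ?iota_uniq // => a b; rewrite !mem_iota !add0n => ha hb.
  rewrite -[a]/(val (Ordinal ha)) -[b]/(val (Ordinal hb)) !wnat_ord.
  by move/val_inj/perm_inj => [].
- move=> z /mapP[j]; rewrite mem_iota add0n => hj ->.
  by rewrite mem_iota add0n -[j]/(val (Ordinal hj)) wnat_ord ltn_ord.
Qed.

Lemma wseq_inj n : injective (@wseq n).
Proof.
move=> w w' e; apply/permP => i; apply: val_inj.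
by have := congr1 (fun s => nth 0 s i) e; rewrite !nth_wseq // !wnat_ord.
Qed.

Lemma sum_Sn n (F : seq nat -> nat) :
  \sum_(w : 'S_n) F (wseq w) = \sum_(s <- permutations (iota 0 n)) F s.
Proof.
rewrite -big_enum /=.
transitivity (\sum_(s <- map (@wseq n) (enum 'S_n)) F s); first by rewrite big_map.
apply: perm_big; apply: perm_of_sub; rewrite ?permutations_uniq //.
- by rewrite map_inj_uniq ?enum_uniq //; exact: wseq_inj.
- by move=> s /mapP[w _ ->]; rewrite mem_permutations wseq_perm.
- by rewrite size_map -cardE card_Sn size_permutations ?iota_uniq // size_iota.
Qed.

Definition bitof L (S : {set 'I_L}) := [seq (i \in S) | i <- enum 'I_L].

Lemma dout_nth s b :
  dout s b = \sum_(i < (size s).-1) (~~ nth false b i && (nth 0 s i.+1 < nth 0 s i)).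
Proof.
elim: s b => [|x s IH] b; first by rewrite big_ord0.
case: s IH => [|y s] IH; first by rewrite big_ord0.
have -> : dout [:: x, y & s] b = (~~ head false b && (y < x)) + dout (y :: s) (behead b) by [].
rewrite IH big_ord_recl /=; congr (_ + _).
by apply: eq_bigr => i _; rewrite nth_behead /bump add0n.
Qed.

Lemma card_des n (w : 'S_n) (S : {set 'I_n.-1}) :
  #|descents w :\: S| = dout (wseq w) (bitof S).
Proof.
rewrite -sum1_card big_mkcond /= dout_nth size_map size_iota.
apply: eq_bigr => i _; rewrite !inE.
have hi : (i : nat) < n.-1 := ltn_ord i.
have hi1 : i.+1 < n by rewrite -ltn_predRL.
rewrite (nth_map i) ?size_enum_ord // nth_ord_enum !nth_wseq //.
exact: ltnW hi1.
Qed.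

Lemma count_bitof L (S : {set 'I_L}) : count id (bitof S) = #|S|.
Proof.
by rewrite count_map -sum1_count big_enum_cond sum1_card.
Qed.

Lemma size_bitof L (S : {set 'I_L}) : size (bitof S) = L.
Proof. by rewrite size_map size_enum_ord. Qed.

Lemma bitof_inj L : injective (@bitof L).
Proof.
move=> S S' e; apply/setP => i.
have := congr1 (fun b => nth false b i) e.
rewrite /bitof !(nth_map i) -?enumT ?size_enum_ord ?nth_ord_enum //.
Qed.

Lemma sum_sets L t (G : seq bool -> nat) :
  \sum_(S : {set 'I_L} | #|S| == t) G (bitof S) = \sum_(b <- bs L t) G b.
Proof.
pose P := [pred S : {set 'I_L} | #|S| == t].
transitivity (\sum_(S <- enum P) G (bitof S)); first by rewrite big_enum.
transitivity (\sum_(b <- map (@bitof L) (enum P)) G b); first by rewrite big_map.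
apply: perm_big; apply: perm_of_sub; rewrite ?uniq_bs //.
- by rewrite map_inj_uniq ?enum_uniq //; exact: bitof_inj.
- move=> b /mapP[S]; rewrite mem_enum => /eqP hS ->.
  by rewrite mem_bs size_bitof count_bitof hS !eqxx.
  rewrite size_map -cardE size_bs; have h := card_draws (ordinal L) t; rewrite card_ord in h.
  by rewrite -h leq_eqVlt; apply/orP; left; apply/eqP/eq_card => S; rewrite !inE.
Qed.

Definition H r A k := \sum_(b <- bs (size A).-1 r.-1) \sum_(s <- permutations A) (dout s b == k).

Lemma eulerian_seq n k : 0 < n -> eulerian n k = \sum_(s <- permutations (iota 0 n)) (des s == k).
Proof.
rewrite /eulerian; case: n => // n _ /=.
rewrite -sum1_card big_mkcond /=.
rewrite -(sum_Sn n.+1 (fun s => (des s == k) : nat)); apply: eq_bigr => w _.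
rewrite inE -(setD0 (descents w)) (card_des w).
have mc : forall (s : seq 'I_n), map (fun _ => false) s = nseq (size s) false.
  by elim => //= ? ? ->.
have -> : bitof (set0 : {set 'I_n}) = nseq n false.
  by rewrite /bitof (eq_map (g := fun _ => false)) ?mc ?size_enum_ord // => i; rewrite inE.
by rewrite dout_nseq; case: (des _ == k).
Qed.

Lemma eulerian_r_seq r n k : 0 < n -> eulerian_r r n k = H r (iota 0 n) k.
Proof.
rewrite /eulerian_r; case: n => // n _ /=.
rewrite -sum1_card big_mkcond /=.
transitivity (\sum_(w : 'S_n.+1) \sum_(S : {set 'I_n})
                 ((#|S| == r.-1) && (#|descents w :\: S| == k) : nat)).
  by rewrite pair_big /=; apply: eq_bigr => -[w S] _; rewrite inE.
rewrite exchange_big /=.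
transitivity (\sum_(S : {set 'I_n} | #|S| == r.-1)
   \sum_(s <- permutations (iota 0 n.+1)) (dout s (bitof S) == k)).
  rewrite [RHS]big_mkcond; apply: eq_bigr => S _; case: (#|S| == r.-1) => /=; last by rewrite big1.
  rewrite -(sum_Sn n.+1 (fun s => (dout s (bitof S) == k) : nat)).
  by apply: eq_bigr => w _; rewrite (card_des w).
rewrite (sum_sets _ _ (fun b => \sum_(s <- permutations (iota 0 n.+1)) (dout s b == k))). by rewrite /H /= size_iota.
Qed.


Lemma ind_split a c k : ((a + c == k) : nat) = \sum_(i < k.+1) ((a == i) * (c == k - i)).
Proof.
case: (leqP a k) => h.
  rewrite (bigD1 (Ordinal (h : a < k.+1))) //= eqxx mul1n big1 ?addn0.
    by congr (nat_of_bool _); apply/eqP/eqP; lia.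
  move=> i /= ne; rewrite (_ : (a == i) = false) //; apply/eqP => e; move: ne; rewrite -val_eqE /= e eqxx; by [].
rewrite big1 => [|i _]; last by rewrite (_ : (a == i) = false) //; apply/eqP => e; have := ltn_ord i; lia.
by rewrite (_ : (a + c == k) = false) //; apply/eqP; lia.
Qed.

Lemma sum4 (I1 I2 I3 : Type) (l1 : seq I1) (l2 : seq I2) (l3 : seq I3) K
  (f : I2 -> 'I_K -> nat) (g : I1 -> I3 -> 'I_K -> nat) :
  \sum_(b <- l1) \sum_(s1 <- l2) \sum_(s2 <- l3) \sum_(i < K) (f s1 i * g b s2 i) =
  \sum_(i < K) (\sum_(s1 <- l2) f s1 i) * (\sum_(b <- l1) \sum_(s2 <- l3) g b s2 i).
Proof.
transitivity (\sum_(b <- l1) \sum_(s1 <- l2) \sum_(i < K) \sum_(s2 <- l3) (f s1 i * g b s2 i)).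
  by apply: eq_bigr => b _; apply: eq_bigr => s1 _; rewrite exchange_big.
transitivity (\sum_(b <- l1) \sum_(i < K) \sum_(s1 <- l2) \sum_(s2 <- l3) (f s1 i * g b s2 i)).
  by apply: eq_bigr => b _; rewrite exchange_big.
rewrite exchange_big; apply: eq_bigr => i _.
rewrite big_distrl /= exchange_big; apply: eq_bigr => s1 _.
rewrite big_distrr /=; apply: eq_bigr => b _.
by rewrite big_distrr.
Qed.

Lemma H_rec r A k : uniq A -> 0 < size A ->
  H r.+2 A k = \sum_(j < (size A).-1) \sum_(B <- subs j.+1 A) \sum_(i < k.+1)
      (\sum_(s1 <- permutations B) (des s1 == i)) * H r.+1 (rest A B) (k - i).
Proof.
move=> uA nA; rewrite {1}/H /= bs_first; apply: eq_bigr => j _.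
have hj : j.+1 <= size A by apply: ltnW; rewrite -ltn_predRL.
transitivity (\sum_(b <- bs ((size A).-1 - j.+1) r)
   \sum_(B <- subs j.+1 A) \sum_(s1 <- permutations B) \sum_(s2 <- permutations (rest A B))
      (des s1 + dout s2 b == k)).
  apply: eq_bigr => b _.
  under eq_bigr => s _ do rewrite dout_cut.
  by rewrite (split_perms (fun s1 s2 => (des s1 + dout s2 b == k) : nat) uA hj).
rewrite exchange_big /=; apply: eq_big_seq => B BA.
have sr : size (rest A B) = size A - j.+1.
  have := perm_size (perm_rest uA BA); rewrite size_cat.
  by move: BA; rewrite mem_subs => /andP[_ /eqP ->]; lia.
rewrite /H sr (_ : (size A - j.+1).-1 = (size A).-1 - j.+1); last by lia.
under eq_bigr => b _ do under eq_bigr => s1 _ do under eq_bigr => s2 _ do rewrite ind_split.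
exact: sum4.
Qed.

Definition Qg (N M r n k : nat) : nat :=
  \sum_(eps : {ffun 'I_r -> 'I_N} | \sum_(i < r) (eps i : nat) == n)
    \sum_(t : {ffun 'I_r -> 'I_M} | \sum_(i < r) (t i : nat) == k)
      multinom n (fun i => (eps i : nat)) *
      \prod_(i < r) eulerian (eps i) (t i).

Definition fcons (T : Type) r (x : T) (g : {ffun 'I_r -> T}) : {ffun 'I_r.+1 -> T} :=
  [ffun i => if unlift ord0 i is Some j then g j else x].

Lemma fcons0 T r (x : T) g : @fcons T r x g ord0 = x.
Proof. by rewrite ffunE unlift_none. Qed.

Lemma fconsS T r (x : T) g i : @fcons T r x g (lift ord0 i) = g i.
Proof. by rewrite ffunE liftK. Qed.

Lemma sum_ffunS (T : finType) r (F : {ffun 'I_r.+1 -> T} -> nat) :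
  \sum_f F f = \sum_(x : T) \sum_(g : {ffun 'I_r -> T}) F (fcons x g).
Proof.
rewrite pair_big /=.
apply: (reindex (fun p : T * {ffun 'I_r -> T} => fcons p.1 p.2)).
apply: onW_bij.
exists (fun f : {ffun 'I_r.+1 -> T} => (f ord0, [ffun i => f (lift ord0 i)])).
  move=> [x g] /=; rewrite fcons0; congr pair; apply/ffunP => i.
  by rewrite ffunE fconsS.
move=> f; apply/ffunP => i; case: (unliftP ord0 i) => [j ->|->].
  by rewrite fconsS ffunE.
by rewrite fcons0.
Qed.

Lemma big_ind (I : Type) (r : seq I) (P : pred I) (F : I -> nat) :
  \sum_(i <- r | P i) F i = \sum_(i <- r) P i * F i.
Proof. by rewrite big_mkcond; apply: eq_bigr => i _; case: (P i); rewrite ?mul1n. Qed.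

Lemma multinom_ext r n (e1 e2 : 'I_r -> nat) : e1 =1 e2 -> multinom n e1 = multinom n e2.
Proof. by move=> e; rewrite /multinom (eq_bigr _ (fun i _ => congr1 factorial (e i))). Qed.

Lemma prod_fact_dvd r (e : 'I_r -> nat) : \prod_(i < r) (e i)`! %| (\sum_(i < r) e i)`!.
Proof.
elim: r e => [|r IH] e; first by rewrite !big_ord0.
rewrite !big_ord_recl.
set S := \sum_(i < r) e (lift ord0 i).
rewrite -(bin_fact (leq_addr S (e ord0))) addKn.
by apply: dvdn_mull; rewrite dvdn_mul // IH.
Qed.

Lemma multinomS r (e : 'I_r.+1 -> nat) :
  multinom (\sum_i e i) e =
  'C(\sum_i e i, e ord0) * multinom (\sum_(i < r) e (lift ord0 i)) (fun i => e (lift ord0 i)).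
Proof.
rewrite /multinom !big_ord_recl.
set S := \sum_(i < r) e (lift ord0 i).
set P := \prod_(i < r) (e (lift ord0 i))`!.
have Pgt0 : 0 < P by rewrite prodn_gt0 // => i; rewrite fact_gt0.
have [q hq] : exists q, S`! = q * P.
  by exists (S`! %/ P); rewrite divnK // prod_fact_dvd.
rewrite -(bin_fact (leq_addr S (e ord0))) addKn hq mulnK //.
rewrite (_ : 'C(e ord0 + S, e ord0) * ((e ord0)`! * (q * P)) =
             ('C(e ord0 + S, e ord0) * q) * ((e ord0)`! * P)); last by lia.
by rewrite mulnK // muln_gt0 fact_gt0.
Qed.

Lemma sum_fcons r N x (g : {ffun 'I_r -> 'I_N}) :
  \sum_(i < r.+1) (fcons x g i : nat) = x + \sum_(i < r) (g i : nat).
Proof. by rewrite big_ord_recl fcons0; congr (_ + _); apply: eq_bigr => i _; rewrite fconsS. Qed.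

Lemma prod_fcons r N M x y (g : {ffun 'I_r -> 'I_N}) (h : {ffun 'I_r -> 'I_M}) :
  \prod_(i < r.+1) eulerian (fcons x g i) (fcons y h i) =
  eulerian x y * \prod_(i < r) eulerian (g i) (h i).
Proof. by rewrite big_ord_recl !fcons0; congr (_ * _); apply: eq_bigr => i _; rewrite !fconsS. Qed.

Lemma multinom_fcons r N (x : 'I_N) (g : {ffun 'I_r -> 'I_N}) :
  multinom (x + \sum_(i < r) (g i : nat)) (fun i => (fcons x g i : nat)) =
  'C(x + \sum_(i < r) (g i : nat), x) * multinom (\sum_(i < r) (g i : nat)) (fun i => (g i : nat)).
Proof.
have := multinomS (fun i => (fcons x g i : nat)).
rewrite sum_fcons fcons0 => ->; congr (_ * _).
rewrite (eq_bigr (fun i => (g i : nat))) => [|i _]; last by rewrite fconsS.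
by apply: multinom_ext => i; rewrite fconsS.
Qed.

Lemma eq_add_sub x s n : (x + s == n) = (x <= n) && (s == n - x).
Proof. by case: (leqP x n) => h /=; [apply/eqP/eqP|apply/eqP]; lia. Qed.

Lemma sum2_ind (I J : finType) (P : pred I) (Q : pred J) (X : I -> J -> nat) a :
  \sum_i \sum_j a * (P i * (Q j * X i j)) = a * \sum_(i | P i) \sum_(j | Q j) X i j.
Proof.
rewrite [RHS]big_distrr [RHS]big_ind; apply: eq_bigr => i _.
rewrite [X in _ = _ * (_ * X)]big_ind !big_distrr /=; apply: eq_bigr => j _.
by rewrite mulnCA !mulnA.
Qed.

Lemma Qg_rec N M r n k :
  Qg N M r.+1 n k =
  \sum_(m < N) \sum_(j < M) ((m <= n) * (j <= k)) *
     ('C(n, m) * (eulerian m j * Qg N M r (n - m) (k - j))).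
Proof.
transitivity (\sum_(x : 'I_N) \sum_(g : {ffun 'I_r -> 'I_N}) \sum_(y : 'I_M)
  \sum_(h : {ffun 'I_r -> 'I_M})
  ((x + \sum_(i<r) (g i : nat) == n) * (y + \sum_(i<r) (h i : nat) == k)) *
  (multinom n (fun i => (fcons x g i : nat)) * (eulerian x y * \prod_(i<r) eulerian (g i) (h i)))).
  rewrite /Qg big_ind sum_ffunS; apply: eq_bigr => x _; apply: eq_bigr => g _.
  rewrite sum_fcons [\sum_(t : {ffun 'I_r.+1 -> 'I_M} | _) _]big_ind sum_ffunS big_distrr; apply: eq_bigr => y _.
  rewrite big_distrr; apply: eq_bigr => h _.
  by rewrite sum_fcons prod_fcons /= !mulnA.
transitivity (\sum_(x : 'I_N) \sum_(y : 'I_M) \sum_(g : {ffun 'I_r -> 'I_N})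
  \sum_(h : {ffun 'I_r -> 'I_M})
  ((x <= n) * (y <= k) * ('C(n, x) * eulerian x y)) *
    ((\sum_(i<r) (g i : nat) == n - x) * ((\sum_(i<r) (h i : nat) == k - y) *
     (multinom (n - x) (fun i => (g i : nat)) * \prod_(i<r) eulerian (g i) (h i))))).
  apply: eq_bigr => x _; rewrite exchange_big; apply: eq_bigr => y _.
  apply: eq_bigr => g _; apply: eq_bigr => h _.
  rewrite !eq_add_sub.
  case hx: (x <= n); case: (y <= k) => /=; rewrite ?mul0n ?muln0 //.
  case hg: (_ == n - x); case hh: (_ == k - y); rewrite /= ?mul0n ?muln0 //.
  have En : n = x + \sum_(i<r) (g i : nat) by rewrite (eqP hg) subnKC // hx.
  rewrite !mul1n {1}En multinom_fcons -En (eqP hg); lia.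
apply: eq_bigr => x _; apply: eq_bigr => y _.
by rewrite sum2_ind /Qg !mulnA.
Qed.

Lemma Qg0 N M n k : Qg N M 0 n k = (n == 0) * (k == 0).
Proof.
rewrite /Qg big_ind (eq_bigr (fun _ => (n == 0) * (k == 0))).
  by rewrite sum_nat_const card_ffun !card_ord expn0 mul1n.
move=> eps _; rewrite big_ord0 big_ind (eq_bigr (fun _ => (k == 0) * n`!)).
  rewrite sum_nat_const card_ffun !card_ord expn0 mul1n.
  by rewrite eq_sym; case: n => [|n] //=; rewrite muln1.
move=> t _; rewrite big_ord0 big_ord0 /multinom big_ord0 divn1 muln1 eq_sym.
by [].
Qed.

Lemma Qg_bound r : forall N M N' M' n k, n < N -> k < M -> n < N' -> k < M' ->
  Qg N M r n k = Qg N' M' r n k.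
Proof.
elim: r => [|r IH] N M N' M' n k hN hM hN' hM'; first by rewrite !Qg0.
rewrite !Qg_rec.
have conv : forall (N0 M0 : nat), n < N0 -> k < M0 ->
  \sum_(m < N0) \sum_(j < M0) ((m <= n) * (j <= k)) *
     ('C(n, m) * (eulerian m j * Qg N M r (n - m) (k - j))) =
  \sum_(m < n.+1) \sum_(j < k.+1) 'C(n, m) * (eulerian m j * Qg N M r (n - m) (k - j)).
  move=> N0 M0 h1 h2.
  rewrite (big_ord_widen N0 (fun m => \sum_(j < k.+1) 'C(n, m) * (eulerian m j * Qg N M r (n - m) (k - j))) h1).
  rewrite [RHS]big_ind; apply: eq_bigr => m _.
  rewrite (big_ord_widen M0 (fun j => 'C(n, m) * (eulerian m j * Qg N M r (n - m) (k - j))) h2).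
  rewrite [X in _ = _ * X]big_ind big_distrr; apply: eq_bigr => j _ /=.
  by rewrite !ltnS -[LHS]mulnA.
rewrite conv //.
transitivity (\sum_(m < N') \sum_(j < M') ((m <= n) * (j <= k)) *
     ('C(n, m) * (eulerian m j * Qg N M r (n - m) (k - j)))); first by rewrite conv.
apply: eq_bigr => m _; apply: eq_bigr => j _.
case: (leqP m n) => hm; case: (leqP j k) => hj; rewrite ?muln0 ?mul0n //.
by rewrite (IH N M N' M') //; apply: leq_ltn_trans (leq_subr _ _) _.
Qed.

Definition Q r n k := Qg n.+1 k.+1 r n k.

Lemma Q_rec r n k : Q r.+1 n k =
  \sum_(m < n.+1) \sum_(j < k.+1) 'C(n, m) * (eulerian m j * Q r (n - m) (k - j)).
Proof.
rewrite /Q Qg_rec; apply: eq_bigr => m _; apply: eq_bigr => j _.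
have hm : (m <= n) = true by rewrite -ltnS ltn_ord.
have hj : (j <= k) = true by rewrite -ltnS ltn_ord.
rewrite hm hj mul1n; congr (_ * (_ * _)).
by apply: Qg_bound; rewrite // ltnS leq_subr.
Qed.

Lemma Q_n0 r k : Q r.+1 0 k = 0.
Proof.
rewrite Q_rec big1 // => m _; rewrite big1 // => j _.
by rewrite (ord1 m) /eulerian /= muln0.
Qed.

Lemma Q1 n k : Q 1 n k = eulerian n k.
Proof.
rewrite Q_rec big_ord_recr /= big1 => [|m _]; last first.
  rewrite big1 // => j _; rewrite /Q Qg0.
  by rewrite (_ : (n - m == 0) = false) ?muln0 //; apply/negbTE; rewrite -lt0n subn_gt0.
rewrite add0n big_ord_recr /= big1 => [|j _]; last first.
  rewrite /Q Qg0.
  by rewrite (_ : (k - j == 0) = false) ?muln0 ?mul0n //; apply/negbTE; rewrite -lt0n subn_gt0.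
by rewrite add0n /Q Qg0 !subnn binn mul1n muln1.
Qed.

Lemma Q_step r n k : 0 < n -> Q r.+2 n k =
  \sum_(j < n.-1) 'C(n, j.+1) * \sum_(i < k.+1) eulerian j.+1 i * Q r.+1 (n - j.+1) (k - i).
Proof.
case: n => // n _.
have z1 : \sum_(j < k.+1) 'C(n.+1, 0) * (eulerian 0 j * Q r.+1 (n.+1 - 0) (k - j)) = 0.
  by rewrite big1 // => j _; rewrite /eulerian /= muln0.
have z2 : \sum_(j < k.+1) 'C(n.+1, n.+1) * (eulerian n.+1 j * Q r.+1 (n.+1 - n.+1) (k - j)) = 0.
  by rewrite big1 // => j _; rewrite subnn Q_n0 !muln0.
rewrite Q_rec big_ord_recl z1 add0n big_ord_recr /= /bump /= add1n z2 addn0.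
apply: eq_bigr => j _; rewrite big_distrr /= add1n.
by apply: eq_bigr => i _; rewrite mulnA.
Qed.

Lemma sum_const_seq (T : Type) (l : seq T) c : \sum_(x <- l) c = size l * c.
Proof. by elim: l => [|x l IH]; rewrite ?big_nil ?big_cons ?IH ?mulSn. Qed.

Lemma H_Q r : forall A k, uniq A -> 0 < size A -> H r.+1 A k = Q r.+1 (size A) k.
Proof.
elim: r => [|r IH] A k uA nA.
  rewrite /H /= bs0 big_seq1.
  under eq_bigr do rewrite dout_nseq.
  by rewrite (std_des uA) -eulerian_seq // Q1.
rewrite H_rec // Q_step //; apply: eq_bigr => j _.
have hj : j.+1 < size A by rewrite -ltn_predRL.
rewrite -size_subs -sum_const_seq; apply: eq_big_seq => B BA.
have [sBA /eqP sB] : subseq B A /\ size B == j.+1 by apply/andP; rewrite -mem_subs.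
have uB : uniq B := subseq_uniq sBA uA.
have sr : size (rest A B) = size A - j.+1.
  have := perm_size (perm_rest uA BA); rewrite size_cat sB; lia.
apply: eq_bigr => i _.
rewrite (std_des uB) -eulerian_seq ?sB // IH ?sr //; first by rewrite filter_uniq.
by rewrite subn_gt0.
Qed.

Theorem lemma2p6 (r n k : nat) (hr : 1 <= r) :
  eulerian_r r n k =
  \sum_(eps : {ffun 'I_r -> 'I_n.+1} | \sum_(i < r) (eps i : nat) == n)
    \sum_(t : {ffun 'I_r -> 'I_k.+1} | \sum_(i < r) (t i : nat) == k)
      multinom n (fun i => (eps i : nat)) *
      \prod_(i < r) eulerian (eps i) (t i).
Proof.
change (eulerian_r r n k = Q r n k).
case: r hr => // r _.
case: n => [|n]; first by rewrite Q_n0.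
by rewrite eulerian_r_seq // H_Q ?iota_uniq ?size_iota.
Qed.
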